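(* Let $q\in(0,1)$, let $\omega_1,\dots,\omega_m>0$ with $\sum_{i=1}^m\omega_i=1$, and let $X_1,\dots,X_m$ be positive random variables with continuous distributions $p_1,\dots,p_m$ and all with the same finite mean $\mathbb E[X_i]=\mu>0$. Let $X$ be a random variable with the mixture distribution $p=\sum_{i=1}^m\omega_i p_i$. Then $$\kappa_q(X)\ \ge\ \sum_{i=1}^m \omega_i\,\kappa_q(X_i).$$
   Context: For a positive random variable $Y$ with continuous distribution and finite mean, and $q\in(0,1)$, the exceedance threshold is $h_Y(q)=\inf\{h\ge 0:\ \mathbb P(Y>h)\le q\}$ and the (theoretical) quantile contribution is $$\kappa_q(Y)=q\,\frac{\mathbb E[Y\mid Y>h_Y(q)]}{\mathbb E[Y]}=\frac{\mathbb E[Y\mathbf 1_{Y>h_Y(q)}]}{\mathbb E[Y]}.$$ *)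

(* Defs.v *)
From HB Require Import structures.
From mathcomp Require Import all_boot all_order all_algebra.
From mathcomp Require Import all_classical all_reals all_analysis.
Set Implicit Arguments. Unset Strict Implicit. Unset Printing Implicit Defensive.
Import Order.TTheory GRing.Theory Num.Theory.
Local Open Scope classical_set_scope.
Local Open Scope ring_scope.

(* Everything is expressed through the distribution (a Borel probability
   measure on R) of the random variable, since h_Y(q) and kappa_q(Y) only
   depend on the law of Y. *)

Definition hY (R : realType) (P : probability R R) (q : R) : R :=
  inf [set h : R | 0 <= h /\ (P `]h, +oo[%classic <= q%:E)%E].

Definition kappa (R : realType) (P : probability R R) (q : R) : R :=
  fine (\int[P]_(x in `]hY P q, +oo[%classic) x%:E)%E / fine (\int[P]_x x%:E)%E.

(* Main.v *)
Require Import Defs.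
From HB Require Import structures.
From mathcomp Require Import all_boot all_order all_algebra.
From mathcomp Require Import all_classical all_reals all_analysis.
From mathcomp Require Import lra measurable_realfun.
Import Order.TTheory GRing.Theory Num.Theory.
Local Open Scope classical_set_scope.
Local Open Scope ring_scope.

Section S.
Context {R : realType}.

Lemma hY_ge0 (Q : probability R R) q : (0 <= hY Q q)%R.
Proof.
rewrite /hY.
set S := [set h : R | _].
have [[x Sx]|] := pselect (exists x, S x).
  by apply: lb_le_inf; [exists x | move=> y []].
move=> /forallNP H; suff -> : S = set0 by rewrite inf0.
by apply/seteqP; split => // y Sy; exact: (H y Sy).
Qed.

Lemma itv_oinfE (a x : R) : `]a, +oo[%classic x = (a < x)%R.
Proof. by rewrite /= in_itv /= andbT. Qed.

Lemma S_nonempty (Q : probability R R) q : (0 < q)%R ->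
  exists n : nat, (Q `]n%:R, +oo[%classic <= q%:E)%E.
Proof.
move=> q0; apply: contrapT => /forallNP H.
have H' n : (q%:E < Q `]n%:R, +oo[%classic)%E by rewrite ltNge; apply/negP; exact: H.
have cv := @nonincreasing_cvg_mu _ _ _ Q (fun n : nat => `]n%:R, +oo[%classic).
have : (q%:E <= Q (\bigcap_n `]n%:R, +oo[%classic))%E.
  apply: (cvge_to_ge (cv _ _ _ _)).
  - by rewrite (le_lt_trans (probability_le1 _ _)) ?ltey.
  - by move=> i; exact: measurable_itv.
  - by apply: bigcapT_measurable => i; exact: measurable_itv.
  - move=> n k nk; apply/subsetPset => x /=; rewrite !in_itv /= !andbT.
    by apply: le_lt_trans; rewrite ler_nat.
  - by apply: nearW => n; exact: ltW (H' n).
suff -> : \bigcap_n `]n%:R, +oo[%classic = set0 :> set R.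
  by rewrite measure0 lee_fin leNgt q0.
apply/seteqP; split => // x /= Hx.
have := Hx (Num.bound `|x|)%N I; rewrite /= in_itv /= andbT.
have := archi_boundP (normr_ge0 x); move=> h1 h2.
have := lt_trans (lt_le_trans h2 (ler_norm x)) h1; by rewrite ltxx.
Qed.

Lemma hY_in (Q : probability R R) q : (0 < q)%R ->
  (Q `]hY Q q, +oo[%classic <= q%:E)%E.
Proof.
move=> q0; rewrite /hY; set S := [set h : R | _].
have [n Hn] := S_nonempty Q q q0.
have Sn : S n%:R by split.
have hS : has_inf S by split; [exists n%:R | exists 0%R => y []].
set h := inf S.
pose F := fun n : nat => `](h + (n.+1%:R)^-1), +oo[%classic.
have mF i : measurable (F i) by exact: measurable_itv.
have UF : \bigcup_n F n = `]h, +oo[%classic.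
  apply/seteqP; split => x /=.
    move=> [k _] /=; rewrite !in_itv /= !andbT; rewrite /F /= in_itv /= andbT; apply: le_lt_trans.
    by rewrite lerDl invr_ge0.
  rewrite in_itv /= andbT => hx.
  have xh0 : (0 < x - h)%R by rewrite subr_gt0.
  exists (Num.bound (x - h)^-1)%N => //; rewrite /F /= in_itv /= andbT -ltrBrDl.
  rewrite -[X in (_ < X)%R](invrK (x - h)) ltf_pV2 ?posrE ?invr_gt0 //.
  apply: (lt_le_trans (archi_boundP _)); first by rewrite invr_ge0 ltW.
  by rewrite ler_nat.
have cv := @nondecreasing_cvg_mu _ _ _ Q F mF.
rewrite -UF; apply: (cvge_to_le (cv _ _)).
- by apply: bigcupT_measurable.
- move=> a b ab; apply/subsetPset => x; rewrite /F /= !in_itv /= !andbT.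
  apply: le_lt_trans; rewrite lerD2l lef_pV2 ?posrE // ler_nat ltnS //.
- apply: nearW => k /=.
  have k0 : 0 < k.+1%:R^-1 :> R by rewrite invr_gt0 ltr0Sn.
  have [s Ss hs] := @inf_adherent R S _ k0 hS.
  apply: le_trans (proj2 Ss).
  apply: le_measure; rewrite ?inE; [exact: mF| exact: measurable_itv|].
  move=> x; rewrite /F /= in_itv /= andbT; move=> hx; rewrite in_itv /= andbT; exact: lt_trans hs hx.
Qed.

Lemma hY_left (Q : probability R R) q : (forall x, Q [set x] = 0%E) ->
  0 < hY Q q -> (q%:E <= Q `]hY Q q, +oo[%classic)%E.
Proof.
move=> atom; rewrite /hY; set S := [set h : R | _] => h0.
set h := inf S in h0 *.
have lb : lbound S h by apply: ge_inf; exists 0 => y [].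
pose G := fun n : nat => `](h - h / n.+1%:R), +oo[%classic.
have mG i : measurable (G i) by exact: measurable_itv.
have IG : \bigcap_n G n = `[h, +oo[%classic.
  apply/seteqP; split => x /=.
    move=> Hx; rewrite in_itv /= andbT; apply/negPn/negP; rewrite -ltNge => xh.
    have hx0 : 0 < h - x by rewrite subr_gt0.
    have := Hx (Num.bound (h / (h - x)))%N I; rewrite /G /= in_itv /= andbT.
    suff key : h / (Num.bound (h / (h - x))).+1%:R < h - x by move=> H; have := ltrD H key; rewrite subrK [x + _]addrC subrK ltxx.
    set N := Num.bound _; rewrite ltr_pdivrMr ?ltr0Sn // mulrC -ltr_pdivrMr //.
    apply/(lt_le_trans (archi_boundP _)); first by rewrite divr_ge0 ?ltW.
    by rewrite ler_nat.
  rewrite in_itv /= andbT => hx n _; rewrite /G /= in_itv /= andbT.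
  apply: lt_le_trans hx; rewrite ltrBlDr ltrDl divr_gt0 ?ltr0Sn //.
have cv := @nonincreasing_cvg_mu _ _ _ Q G.
have : (q%:E <= Q (\bigcap_n G n))%E.
  apply: (cvge_to_ge (cv _ mG _ _)).
  - by rewrite (le_lt_trans (probability_le1 _ _)) ?ltey.
  - by apply: bigcapT_measurable.
  - move=> a b ab; apply/subsetPset => x; rewrite /G /= !in_itv /= !andbT.
    apply: le_lt_trans; rewrite lerD2l lerN2; apply: ler_wpM2l; first exact: ltW.
    by rewrite lef_pV2 ?posrE ?ltr0Sn // ler_nat ltnS.
  - apply: nearW => k /=.
    rewrite ltW // ltNge; apply/negP => Hle.
    have Sg : S (h - h / k.+1%:R).
      split => //; rewrite subr_ge0 ler_pdivrMr ?ltr0Sn // ler_peMr ?(ltW h0) //.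
      by rewrite ler1n.
    have := lb _ Sg; rewrite lerDl oppr_ge0 leNgt divr_gt0 ?ltr0Sn //.
suff -> : \bigcap_n G n = [set h] `|` `]h, +oo[%classic.
  rewrite measureU //; first by move: (atom h) => /= ah; rewrite [X in X + _]ah add0e.
  apply/seteqP; split => // x [/= ->]; by rewrite in_itv /= ltxx.
rewrite IG; apply/seteqP; split => x /=; rewrite !in_itv /= !andbT.
  by rewrite le_eqVlt => /orP [/eqP ->|]; [left|right].
by case=> [->|/ltW].
Qed.

Lemma mfA (A : set R) (c : R) : measurable A ->
  measurable_fun setT (fun x : R => ((x + c) * \1_A x)%:E).
Proof.
move=> mA; apply/measurable_EFinP; apply: measurable_funM.
  by apply: measurable_funD => //.
exact: measurable_indic.
Qed.

Lemma mfC (A : set R) (c : R) : measurable A ->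
  measurable_fun setT (fun x : R => ((0 + c) * \1_A x)%:E).
Proof.
move=> mA; apply/measurable_EFinP; apply: measurable_funM => //.
Qed.

Lemma int_setE (Q : probability R R) (A : set R) :
  (\int[Q]_(x in A) x%:E = \int[Q]_x ((x + 0) * \1_A x)%:E)%E.
Proof.
rewrite integral_mkcond epatch_indic; apply: eq_integral => x _.
by rewrite /= addr0 EFinM.
Qed.

Lemma meas_intE (Q : probability R R) (A : set R) (h : R) : measurable A -> (0 <= h) ->
  (h%:E * Q A = \int[Q]_x ((0 + h) * \1_A x)%:E)%E.
Proof.
move=> mA h0; rewrite -{1}(setIT A) -integral_indic // -ge0_integralZl //.
- by apply: eq_integral => x _; rewrite add0r EFinM.
- by apply/measurable_EFinP; exact: measurable_indic.
Qed.

Lemma lagrange (Q : probability R R) (a h : R) : 0 <= a -> 0 <= h ->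
  (\int[Q]_(x in `]a, +oo[%classic) x%:E + h%:E * Q `]h, +oo[%classic <=
   \int[Q]_(x in `]h, +oo[%classic) x%:E + h%:E * Q `]a, +oo[%classic)%E.
Proof.
move=> a0 h0.
have mA : measurable (`]a, +oo[%classic : set R) by exact: measurable_itv.
have mB : measurable (`]h, +oo[%classic : set R) by exact: measurable_itv.
have ge0A x : (0 <= ((x + 0) * \1_(`]a, +oo[%classic) x)%:E)%E.
  rewrite lee_fin indicE; have [xA|xA] := boolP (x \in _); rewrite /= ?mulr0 ?mulr1 //.
  by move: xA; rewrite in_setE /= in_itv /= andbT addr0 => /ltW; apply: le_trans.
have ge0B x : (0 <= ((x + 0) * \1_(`]h, +oo[%classic) x)%:E)%E.
  rewrite lee_fin indicE; have [xA|xA] := boolP (x \in _); rewrite /= ?mulr0 ?mulr1 //.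
  by move: xA; rewrite in_setE /= in_itv /= andbT addr0 => /ltW; apply: le_trans.
have ge0C (A : set R) x : (0 <= ((0 + h) * \1_A x)%:E)%E.
  by rewrite lee_fin mulr_ge0 ?add0r.
rewrite !int_setE !meas_intE // -!ge0_integralD //; try (by apply: mfA; exact: measurable_itv);
  try (by apply: mfC; exact: measurable_itv); try (by move=> x _; exact: ge0A); try (by move=> x _; exact: ge0B).
apply: ge0_le_integral => //; try (by move=> x _; rewrite adde_ge0);
  try (by apply: emeasurable_funD; [apply: mfA | apply: mfC]; exact: measurable_itv).
move=> x _; rewrite -!EFinD lee_fin !addr0 !add0r !indicE !mem_setE /= !in_itv /= !andbT.
have [xa|xa] := ltP a x; have [xh|xh] := ltP h x; rewrite /= ?mulr1 ?mulr0 ?addr0 ?add0r //.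
- exact: ltW.
Qed.

Lemma mix_int m (w : 'I_m -> R) (p : 'I_m -> probability R R) (P : probability R R)
  (hw : forall i, 0 <= w i)
  (hP : forall A : set R, measurable A -> P A = (\sum_(i < m) (w i)%:E * p i A)%E)
  (f : R -> \bar R) : measurable_fun setT f -> (forall x, 0 <= f x)%E ->
  (\int[P]_x f x = \sum_(i < m) (w i)%:E * \int[p i]_x f x)%E.
Proof.
move=> mf f0.
pose mm : {measure set R -> \bar R}^nat := fun n =>
  match (insub n : option 'I_m) with
  | Some i => (mscale (NngNum (hw i)) (p i) : {measure set R -> \bar R})
  | None => mzero end.
have mmE (i : 'I_m) : mm i = (mscale (NngNum (hw i)) (p i) : {measure set R -> \bar R}).
  by rewrite /mm valK.
rewrite (@eq_measure_integral _ _ _ setT (msum mm m)); last first.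
  move=> A mA _; rewrite [LHS](hP A mA) /msum.
  by apply: eq_bigr => i _; rewrite mmE.
rewrite ge0_integral_measure_sum //.
apply: eq_bigr => i _; rewrite mmE ge0_integral_mscale //.
Qed.

Lemma mEFin : measurable_fun (setT : set R) (EFin : R -> \bar R).
Proof. by apply/measurable_EFinP. Qed.

Lemma int_pos (Q : probability R R) : Q `]-oo, 0%R]%classic = 0%E ->
  (\int[Q]_x x%:E = \int[Q]_(x in `]0%R, +oo[%classic) x%:E)%E.
Proof.
move=> Q0.
have -> : (setT : set R) = `]-oo, 0]%classic `|` `]0, +oo[%classic.
  apply/seteqP; split => // x _ /=; rewrite !in_itv /= andbT.
  by case: (leP x 0); [left|right].
rewrite integral_setU //; try (by apply: measurable_funTS; exact: mEFin);
  try (exact: measurable_itv); try (apply/disj_setPS => x [] /=; rewrite !in_itv /= andbT => x0 /(le_lt_trans x0);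
  by rewrite ltxx).
rewrite null_set_integral ?add0e //; try exact: measurable_itv.
all: try (by apply: measurable_funTS; exact: mEFin).
Qed.

Lemma prob_fin (Q : probability R R) (A : set R) : measurable A ->
  Q A = (fine (Q A))%:E.
Proof.
move=> mA; rewrite fineK // ge0_fin_numE //.
by rewrite (le_lt_trans (probability_le1 _ _)) ?ltey.
Qed.

Lemma int_ge0 (Q : probability R R) (a : R) : 0 <= a ->
  (0 <= \int[Q]_(x in `]a, +oo[%classic) x%:E)%E.
Proof.
move=> a0; apply: integral_ge0 => x /=; rewrite in_itv /= andbT lee_fin => /ltW.
exact: le_trans.
Qed.

Lemma int_le (Q : probability R R) (a : R) : 0 <= a ->
  (\int[Q]_(x in `]a, +oo[%classic) x%:E <= \int[Q]_(x in `]0%R, +oo[%classic) x%:E)%E.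
Proof.
move=> a0; apply: ge0_subset_integral; try exact: measurable_itv.
- by apply: measurable_funTS; exact: mEFin.
- by move=> x /=; rewrite in_itv /= andbT lee_fin => /ltW.
- move=> x /=; rewrite !in_itv /= !andbT; exact: le_lt_trans.
Qed.

End S.

Theorem mainTheorem4 (R : realType) (m : nat) (q : R) (w : 'I_m -> R)
  (p : 'I_m -> probability R R) (P : probability R R) (mu : R) :
  0 < q < 1 ->
  (forall i, 0 < w i) -> \sum_(i < m) w i = 1 ->
  (* each X_i is positive: P(X_i <= 0) = 0 *)
  (forall i, p i `]-oo, 0]%classic = 0%E) ->
  (* each X_i has a continuous (atomless) distribution *)
  (forall i (x : R), p i [set x] = 0%E) ->
  (* each X_i has finite mean, equal to mu > 0 *)
  (forall i, (p i).-integrable setT (fun x : R => x%:E)) ->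
  (forall i, (\int[p i]_x x%:E)%E = mu%:E) -> 0 < mu ->
  (* P is the mixture distribution sum_i w_i p_i *)
  (forall A : set R, measurable A -> P A = (\sum_(i < m) (w i)%:E * p i A)%E) ->
  \sum_(i < m) w i * kappa (p i) q <= kappa P q.
Proof.
move=> /andP[q0 q1] w0 w1 pneg patom pint pmean mu0 hP.
have w0' i : 0 <= w i by exact: ltW.
set h := hY P q.
have h0 : 0 <= h by exact: hY_ge0.
have mA : measurable (`]h, +oo[%classic : set R) by exact: measurable_itv.
have ppos i : (\int[p i]_(x in `]0%R, +oo[%classic) x%:E = mu%:E)%E.
  by rewrite -int_pos.
have Pint (a : R) : 0 <= a ->
    (\int[P]_(x in `]a, +oo[%classic) x%:E =
     \sum_(i < m) (w i)%:E * \int[p i]_(x in `]a, +oo[%classic) x%:E)%E.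
  move=> a0; rewrite int_setE; under eq_bigr do rewrite int_setE.
  apply: mix_int => //; first by apply: mfA; exact: measurable_itv.
  move=> x; rewrite lee_fin indicE; have [xA|xA] := boolP (x \in _); rewrite /= ?mulr0 ?mulr1 //.
  by move: xA; rewrite in_setE /= in_itv /= andbT addr0 => /ltW; apply: le_trans.
have Pneg : P `]-oo, 0%R]%classic = 0%E.
  rewrite [LHS]hP; last exact: measurable_itv. by rewrite big1 // => i _; rewrite pneg mule0.
have Patom x : P [set x] = 0%E.
  rewrite [LHS]hP; last exact: measurable_set1. by rewrite big1 // => i _; rewrite patom mule0.
have Pmean : (\int[P]_x x%:E = mu%:E)%E.
  rewrite int_pos // Pint //; under eq_bigr do rewrite ppos -EFinM.
  by rewrite sumEFin -mulr_suml w1 mul1r.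
have fint (i : 'I_m) (a : R) : 0 <= a -> (\int[p i]_(x in `]a, +oo[%classic) x%:E =
    (fine (\int[p i]_(x in `]a, +oo[%classic) x%:E))%:E)%E.
  move=> a0; rewrite fineK // ge0_fin_numE ?int_ge0 //.
  by rewrite (le_lt_trans (int_le (p i) a a0)) // ppos ltey.
pose I i := fine (\int[p i]_(x in `]hY (p i) q, +oo[%classic) x%:E).
pose J i := fine (\int[p i]_(x in `]h, +oo[%classic) x%:E).
pose c i := fine (p i `]h, +oo[%classic).
pose d i := fine (p i `]hY (p i) q, +oo[%classic).
have lagR i : I i + h * c i <= J i + h * d i.
  have := @lagrange _ (p i) _ _ (hY_ge0 (p i) q) h0.
  rewrite fint ?hY_ge0 // (fint i h) // (prob_fin (p i) _ mA).
  rewrite (prob_fin (p i) _ (measurable_itv `]hY (p i) q, +oo[)).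
  by rewrite -!EFinM -!EFinD lee_fin.
have dq i : d i <= q.
  have := hY_in (p i) q q0; rewrite (prob_fin (p i) _ (measurable_itv `]hY (p i) q, +oo[)).
  by rewrite lee_fin.
have PA : P `]h, +oo[%classic = (\sum_(i < m) w i * c i)%:E.
  rewrite [LHS]hP // -sumEFin; apply: eq_bigr => i _.
  by rewrite (prob_fin (p i) _ mA) -EFinM.
have hq : h * q <= h * \sum_(i < m) w i * c i.
  have [h00|hpos] := eqVneq h 0; first by rewrite h00 !mul0r.
  apply: ler_wpM2l => //; rewrite -lee_fin -PA.
  apply: hY_left => //; rewrite lt_neqAle h0 andbT eq_sym; exact: hpos.
have key : \sum_(i < m) w i * I i <= \sum_(i < m) w i * J i.
  have S1 : \sum_(i < m) w i * (I i + h * c i) <= \sum_(i < m) w i * (J i + h * q).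
    apply: ler_sum => i _; apply: ler_wpM2l => //.
    apply: (le_trans (lagR i)); rewrite lerD2l; apply: ler_wpM2l => //.
  move: S1; rewrite !(eq_bigr _ (fun i _ => mulrDr _ _ _)) !big_split /=.
  rewrite -mulr_suml w1 mul1r.
  have -> : \sum_(i < m) w i * (h * c i) = h * \sum_(i < m) w i * c i.
    by rewrite mulr_sumr; apply: eq_bigr => i _; rewrite mulrCA.
  move=> S1; rewrite -(lerD2r (h * q)); apply: (le_trans _ S1); rewrite lerD2l //.
rewrite /kappa -/h Pmean Pint // (eq_bigr (fun i => (w i * J i)%:E)); last first.
  by move=> i _; rewrite (fint i h) // -EFinM.
rewrite sumEFin /=.
have -> : \sum_(i < m) w i * (fine (\int[p i]_(x in `]hY (p i) q, +oo[%classic) x%:E)%E /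
      fine (\int[p i]_x x%:E)%E) = (\sum_(i < m) w i * I i) / mu.
  rewrite mulr_suml; apply: eq_bigr => i _; rewrite pmean /= mulrA //.
by rewrite ler_wpM2r // invr_ge0 ltW.
Qed.
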